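(* A prime tournament $G$ with $|V(G)| \ge 3$ does not have a subtournament isomorphic to $D_4$ if and only if $G$ is isomorphic to $T_n$ for some odd $n \ge 3$.
   Context: A tournament is a finite, non-null, loopless directed graph in which for any two distinct vertices $u,v$ there is exactly one edge with both ends in $\{u,v\}$; write $u\to v$ for the edge from $u$ to $v$. A subtournament is the tournament induced on a nonempty vertex subset. A homogeneous set of $G$ is a set $X\subseteq V(G)$ such that each $v\in V(G)\setminus X$ either has $v\to x$ for all $x\in X$ or $x\to v$ for all $x \in X$; $G$ is prime if every homogeneous set $X$ has $|X|\le 1$ or $X=V(G)$. $D_4$ is the 4-vertex tournament consisting of a cyclic triangle $C$ and a vertex $v$ with $v \to c$ for every vertex $c$ of $C$. For $n=2k+1$, $T_n$ is the tournament on $v_1,\dots,v_n$ with $v_i\to v_j$ iff $j\equiv i+1,\dots,i+k \pmod n$. *)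

(* Defs.v *)
From mathcomp Require Import all_boot.

Set Implicit Arguments. Unset Strict Implicit. Unset Printing Implicit Defensive.

(* A tournament on a finite (nonempty) vertex type T given by its edge relation
   [adj u v] meaning u -> v. *)
Definition is_tournament (T : finType) (adj : rel T) : Prop :=
  0 < #|T| /\
  (forall u, ~~ adj u u) /\
  (forall u v, u != v -> adj u v (+) adj v u).

Definition homogeneous (T : finType) (adj : rel T) (X : {set T}) : Prop :=
  forall v, v \notin X ->
    (forall x, x \in X -> adj v x) \/ (forall x, x \in X -> adj x v).

Definition prime_tournament (T : finType) (adj : rel T) : Prop :=
  forall X : {set T}, homogeneous adj X -> #|X| <= 1 \/ X = [set: T].

Definition tourn_iso (T1 T2 : finType) (a1 : rel T1) (a2 : rel T2) (f : T1 -> T2) : Prop :=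
  bijective f /\ forall u v, a1 u v = a2 (f u) (f v).

Definition isomorphic (T1 T2 : finType) (a1 : rel T1) (a2 : rel T2) : Prop :=
  exists f : T1 -> T2, tourn_iso a1 a2 f.

Definition has_subtournament (T1 T2 : finType) (a1 : rel T1) (a2 : rel T2) : Prop :=
  exists f : T1 -> T2, injective f /\ forall u v, a1 u v = a2 (f u) (f v).

(* D_4 : vertices 0,1,2 form the cyclic triangle 0->1->2->0, vertex 3 -> all. *)
Definition D4_adj : rel 'I_4 := fun u v =>
  ((val u == 0) && (val v == 1)) || ((val u == 1) && (val v == 2))
  || ((val u == 2) && (val v == 0)) || ((val u == 3) && (val v != 3)).

(* T_n for n = 2k+1 : v_i -> v_j iff j = i+1, ..., i+k (mod n); vertices
   indexed 0..n-1. *)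
Definition Tn_adj (n : nat) : rel 'I_n := fun u v =>
  let d := (v + n - u) %% n in (1 <= d) && (d <= n./2).
Arguments Tn_adj n : clear implicits.

(* Main.v *)
Require Import Defs.
From mathcomp Require Import all_boot zify.
Set Implicit Arguments. Unset Strict Implicit.

Lemma distE (n u w : nat) : u < n -> w < n ->
  (w + n - u) %% n = (if u <= w then w - u else w + n - u).
Proof.
move=> hu hw; case: ifP => h.
  have -> : w + n - u = (w - u) + n by lia.
  rewrite modnDr modn_small //; lia.
rewrite modn_small //; lia.
Qed.

Definition dst n (u w : 'I_n) := (w + n - u) %% n.

Lemma dst_lt n (v a b : 'I_n) : Tn_adj n v a -> Tn_adj n v b -> Tn_adj n a b ->
  dst v a < dst v b.
Proof.
rewrite /Tn_adj /dst; case: v => [v hv]; case: a => [a ha]; case: b => [b hb] /=.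
rewrite !distE //.
have h2 : n./2 + n./2 <= n.
  by rewrite -[X in _ <= X](odd_double_half n) addnn leq_addl.
case: (leqP v a); case: (leqP v b); case: (leqP a b); lia.
Qed.

Lemma Tn_noD4 n (h : 'I_4 -> 'I_n) :
  (forall u v, D4_adj u v = Tn_adj n (h u) (h v)) -> False.
Proof.
move=> H.
have e30 := H (@Ordinal 4 3 isT) (@Ordinal 4 0 isT).
have e31 := H (@Ordinal 4 3 isT) (@Ordinal 4 1 isT).
have e32 := H (@Ordinal 4 3 isT) (@Ordinal 4 2 isT).
have e01 := H (@Ordinal 4 0 isT) (@Ordinal 4 1 isT).
have e12 := H (@Ordinal 4 1 isT) (@Ordinal 4 2 isT).
have e20 := H (@Ordinal 4 2 isT) (@Ordinal 4 0 isT).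
rewrite /D4_adj /= in e30 e31 e32 e01 e12 e20.
have := @dst_lt n _ _ _ (esym e30) (esym e31) (esym e01).
have := @dst_lt n _ _ _ (esym e31) (esym e32) (esym e12).
have := @dst_lt n _ _ _ (esym e32) (esym e30) (esym e20).
lia.
Qed.

Lemma t_irr (T : finType) (adj : rel T) : is_tournament adj -> forall u, ~~ adj u u.
Proof. by case=> _ []. Qed.

Lemma t_neq (T : finType) (adj : rel T) : is_tournament adj ->
  forall u v, adj u v -> u != v.
Proof. move=> Ht u v h; apply/eqP=> e; subst; by rewrite (negbTE (t_irr Ht v)) in h. Qed.

Lemma t_anti (T : finType) (adj : rel T) : is_tournament adj ->
  forall u v, adj u v -> ~~ adj v u.
Proof.
move=> Ht u v h; have hn := t_neq Ht h; case: Ht => _ [_ X].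
by move: (X u v hn); rewrite h.
Qed.

Lemma t_tot (T : finType) (adj : rel T) : is_tournament adj ->
  forall u v, u != v -> ~~ adj u v -> adj v u.
Proof.
move=> Ht u v hn h; case: Ht => _ [_ X].
by move: (X u v hn); rewrite (negbTE h).
Qed.

Lemma notri (T : finType) (adj : rel T) : is_tournament adj ->
  ~ has_subtournament D4_adj adj ->
  forall v a b c, adj v a -> adj v b -> adj v c -> adj a b -> adj b c -> adj c a -> False.
Proof.
move=> Ht nD v a b c va vb vc ab bc ca; apply: nD.
pose f (i : 'I_4) := match val i with 0 => a | 1 => b | 2 => c | _ => v end.
have nab := t_neq Ht ab; have nbc := t_neq Ht bc; have nca := t_neq Ht ca.
have nva := t_neq Ht va; have nvb := t_neq Ht vb; have nvc := t_neq Ht vc.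
have av := t_anti Ht va; have bv := t_anti Ht vb; have cv := t_anti Ht vc.
have ba := t_anti Ht ab; have cb := t_anti Ht bc; have ac := t_anti Ht ca.
have aa := t_irr Ht a; have bb := t_irr Ht b; have cc := t_irr Ht c; have vv := t_irr Ht v.
exists f; split.
  move=> [[|[|[|[|i]]]] hi] [[|[|[|[|j]]]] hj] //= e; try (apply: val_inj => //);
  rewrite /f /= in e; subst;
  by rewrite ?eqxx in nab nbc nca nva nvb nvc.
move=> [[|[|[|[|i]]]] hi] [[|[|[|[|j]]]] hj] //=; rewrite /D4_adj /f /=;
  by rewrite ?(negbTE av, negbTE bv, negbTE cv, negbTE ba, negbTE cb, negbTE ac,
       negbTE aa, negbTE bb, negbTE cc, negbTE vv, va, vb, vc, ab, bc, ca).
Qed.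

Lemma outdeg (T : finType) (adj : rel T) : is_tournament adj -> prime_tournament adj ->
  3 <= #|T| -> forall u, exists w, adj u w.
Proof.
move=> Ht Hp Hn u; case: (boolP [exists w, adj u w]) => [/existsP//|/existsPn hn].
exfalso; have : homogeneous adj ([set: T] :\ u).
  move=> v; rewrite !inE andbT negbK => /eqP ->; right=> x; rewrite !inE andbT => hx.
  by apply: (t_tot Ht) => //; rewrite eq_sym.
move/Hp=> [|].
  by move: (cardsD1 u [set: T]); rewrite inE cardsT; lia.
by move/setP/(_ u); rewrite !inE eqxx.
Qed.

Definition srcb (T : finType) (adj : rel T) u x :=
  adj u x && [forall w, (adj u w && (w != x)) ==> adj x w].

Definition sf (T : finType) (adj : rel T) u := odflt u [pick x | srcb adj u x].

Lemma src_ex (T : finType) (adj : rel T) : is_tournament adj -> prime_tournament adj ->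
  3 <= #|T| -> ~ has_subtournament D4_adj adj -> forall u, exists x, srcb adj u x.
Proof.
move=> Ht Hp Hn nD u; have [x0 h0] := outdeg Ht Hp Hn u.
pose F x := #|[set z | adj u z && adj x z]|.
case: (@arg_maxnP T x0 (adj u) F h0) => x hx hmax.
exists x; rewrite /srcb hx /=; apply/forallP=> w; apply/implyP=> /andP[uw wx].
apply/negPn/negP=> nxw.
have wx' : adj w x by apply: (t_tot Ht) => //; rewrite eq_sym.
have : F x < F w.
  apply: proper_card; apply/properP; split.
    apply/subsetP=> z; rewrite !inE => /andP[uz xz]; rewrite uz /=.
    apply/negPn/negP=> nwz.
    have zw : adj z w.
      apply: (t_tot Ht) => //; apply/eqP=> e; subst z; by rewrite xz in nxw.
    exact: (notri Ht nD uw hx uz wx' xz zw).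
  by exists x; rewrite !inE ?hx ?wx' ?(t_irr Ht x) ?andbF.
by move: (hmax w uw); rewrite /F; lia.
Qed.

Lemma sf_spec (T : finType) (adj : rel T) : is_tournament adj -> prime_tournament adj ->
  3 <= #|T| -> ~ has_subtournament D4_adj adj -> forall u,
  adj u (sf adj u) /\ forall w, adj u w -> w != sf adj u -> adj (sf adj u) w.
Proof.
move=> Ht Hp Hn nD u; rewrite /sf; case: pickP => [x /andP[ux /forallP H]|hn].
  by split=> // w uw wx; move: (H w); rewrite uw wx.
by have [x hx] := src_ex Ht Hp Hn nD u; rewrite hn in hx.
Qed.

Lemma sf_inj (T : finType) (adj : rel T) : is_tournament adj -> prime_tournament adj ->
  3 <= #|T| -> ~ has_subtournament D4_adj adj -> injective (sf adj).
Proof.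
move=> Ht Hp Hn nD.
suff H : forall u w, adj u w -> sf adj u = sf adj w -> False.
  move=> u w e; apply/eqP/negPn/negP=> nuw.
  case: (boolP (adj u w)) => h; first exact: (H _ _ h e).
  exact: (H _ _ (t_tot Ht nuw h) (esym e)).
move=> u w uw e.
have [us Hs] := sf_spec Ht Hp Hn nD u; have [ws _] := sf_spec Ht Hp Hn nD w.
have wn : w != sf adj u.
  by rewrite e; apply/eqP=> e'; rewrite -e' in ws; rewrite (negbTE (t_irr Ht w)) in ws.
have := Hs w uw wn; rewrite e => h; by rewrite (negbTE (t_anti Ht h)) in ws.
Qed.

Lemma sf_P (T : finType) (adj : rel T) : is_tournament adj -> prime_tournament adj ->
  3 <= #|T| -> ~ has_subtournament D4_adj adj ->
  forall u w, w != u -> adj w (sf adj u) -> adj w u.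
Proof.
move=> Ht Hp Hn nD u w wu ws; apply/negPn/negP=> nwu.
have uw := t_tot Ht wu nwu.
have [_ Hs] := sf_spec Ht Hp Hn nD u.
have := Hs w uw (t_neq Ht ws) => h; by rewrite (negbTE (t_anti Ht h)) in ws.
Qed.

Lemma cyc (T : finType) (adj : rel T) : is_tournament adj -> prime_tournament adj ->
  3 <= #|T| -> ~ has_subtournament D4_adj adj -> forall u y, fconnect (sf adj) u y.
Proof.
move=> Ht Hp Hn nD u.
set s := sf adj.
have si : injective s := sf_inj Ht Hp Hn nD.
pose X := [set y | fconnect s u y].
have Xit : forall i y, y \in X -> iter i s y \in X.
  move=> i y; rewrite !inE => h; exact: connect_trans h (fconnect_iter _ _ _).
have back : forall v i y, v \notin X -> y \in X -> adj v (iter i s y) -> adj v y.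
  move=> v i y vX yX; elim: i => [//|i IH]; rewrite iterS => h; apply: IH.
  apply: (sf_P Ht Hp Hn nD) => //.
  by apply/eqP=> e; move: vX; rewrite e Xit.
have XX : forall x y, x \in X -> y \in X -> exists i, x = iter i s y.
  move=> x y; rewrite !inE => hx hy.
  have hyx : fconnect s y x by rewrite (fconnect_sym si) in hy; exact: connect_trans hy hx.
  by exists (findex s y x); rewrite iter_findex.
have hom : homogeneous adj X.
  move=> v vX; case: (boolP [exists x in X, adj v x]).
    move=> /existsP[x /andP[xX vx]]; left=> y yX.
    have [i e] := XX x y xX yX; rewrite e in vx; exact: back vX yX vx.
  move=> /existsPn H; right=> x xX; apply: (t_tot Ht).
    by apply/eqP=> e; move: vX; rewrite e xX.
  by move: (H x); rewrite xX.
case: (Hp X hom) => [hc|hX].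
  have uX : u \in X by rewrite inE connect0.
  have suX : s u \in X by rewrite inE fconnect1.
  have [us _] := sf_spec Ht Hp Hn nD u.
  have : #|[set u; s u]| <= #|X|.
    by apply: subset_leq_card; rewrite subUset !sub1set uX suX.
  rewrite cards2 (t_neq Ht us); lia.
move=> y; have : y \in X by rewrite hX inE.
by rewrite inE.
Qed.

Lemma ord_n (T : finType) (adj : rel T) : is_tournament adj -> prime_tournament adj ->
  3 <= #|T| -> ~ has_subtournament D4_adj adj -> forall y, order (sf adj) y = #|T|.
Proof.
move=> Ht Hp Hn nD y; rewrite /order; apply: eq_card => z.
by rewrite -topredE /= (cyc Ht Hp Hn nD).
Qed.

Lemma iter_n (T : finType) (adj : rel T) : is_tournament adj -> prime_tournament adj ->
  3 <= #|T| -> ~ has_subtournament D4_adj adj -> forall y, iter #|T| (sf adj) y = y.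
Proof.
move=> Ht Hp Hn nD y; rewrite -(ord_n Ht Hp Hn nD y).
exact: iter_order (sf_inj Ht Hp Hn nD) y.
Qed.

Lemma iter_ne (T : finType) (adj : rel T) : is_tournament adj -> prime_tournament adj ->
  3 <= #|T| -> ~ has_subtournament D4_adj adj -> forall y t, 0 < t < #|T| ->
  iter t (sf adj) y != y.
Proof.
move=> Ht Hp Hn nD y t /andP[h1 h2]; apply/eqP=> e.
have := findex_iter (f:=sf adj) (x:=y) (i:=t); rewrite (ord_n Ht Hp Hn nD) => /(_ h2).
by rewrite e findex0; lia.
Qed.

Lemma down (T : finType) (adj : rel T) : is_tournament adj -> prime_tournament adj ->
  3 <= #|T| -> ~ has_subtournament D4_adj adj -> forall y k t, 1 <= t -> t + k < #|T| ->
  adj y (iter (t + k) (sf adj) y) -> adj y (iter t (sf adj) y).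
Proof.
move=> Ht Hp Hn nD y k t h1; elim: k => [|k IH]; first by rewrite addn0.
move=> h2 h3; apply: IH; first lia.
rewrite addnS iterS in h3; apply: (sf_P Ht Hp Hn nD) => //.
rewrite eq_sym; apply: (iter_ne Ht Hp Hn nD); lia.
Qed.

Definition dg (T : finType) (adj : rel T) y :=
  find (fun t => ~~ adj y (iter t.+1 (sf adj) y)) (iota 0 #|T|).

Lemma interval (T : finType) (adj : rel T) : is_tournament adj -> prime_tournament adj ->
  3 <= #|T| -> ~ has_subtournament D4_adj adj -> forall y t, t < #|T| ->
  adj y (iter t (sf adj) y) = (1 <= t) && (t <= dg adj y).
Proof.
move=> Ht Hp Hn nD y [|t] ht; first by rewrite /= (negbTE (t_irr Ht y)).
rewrite /=; case: (leqP t.+1 (dg adj y)) => h.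
  have := before_find 0 (a := fun t => ~~ adj y (iter t.+1 (sf adj) y))
     (s := iota 0 #|T|) (i := t) h.
  by rewrite nth_iota ?add0n; [move/negbFE | lia].
have hh : has (fun t => ~~ adj y (iter t.+1 (sf adj) y)) (iota 0 #|T|).
  rewrite has_find size_iota; rewrite /dg in h; lia.
have := nth_find 0 hh; rewrite -/(dg adj y) nth_iota ?add0n; last first.
  by move: hh; rewrite has_find size_iota.
move=> nd; apply/negbTE/negP=> hy.
have := down Ht Hp Hn nD (k := t - dg adj y) (t := (dg adj y).+1) (y := y) (ltn0Sn _).
rewrite (_ : (dg adj y).+1 + (t - dg adj y) = t.+1); last lia.
by move=> /(_ ht hy); rewrite (negbTE nd).
Qed.

Lemma dg_mono (T : finType) (adj : rel T) : is_tournament adj -> prime_tournament adj ->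
  3 <= #|T| -> ~ has_subtournament D4_adj adj -> forall y, dg adj y <= dg adj (sf adj y).
Proof.
move=> Ht Hp Hn nD y; rewrite leqNgt; apply/negP=> hlt.
set s := sf adj in hlt *.
have [ys Hs] := sf_spec Ht Hp Hn nD y.
have cy := cyc Ht Hp Hn nD.
pose X := [set y; s y].
have hom : homogeneous adj X.
  move=> v; rewrite !inE negb_or => /andP[vy vsy].
  set t := findex s y v.
  have tn : t < #|T| by rewrite -(ord_n Ht Hp Hn nD y); apply: findex_max.
  have ev : iter t s y = v by apply: iter_findex.
  have t0 : t != 0 by apply/eqP=> e; move: vy; rewrite -ev e eqxx.
  have t1 : t != 1 by apply/eqP=> e; move: vsy; rewrite -ev e eqxx.
  case: (boolP (adj y v)) => yv.
    right=> x; rewrite !inE => /orP[]/eqP->//; exact: Hs v yv vsy.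
  left=> x; rewrite !inE => /orP[]/eqP->; first by apply: (t_tot Ht) => //; rewrite eq_sym.
  have ev' : iter t.-1 s (s y) = v by rewrite -iterSr prednK ?ev //; lia.
  have := interval Ht Hp Hn nD y tn; rewrite ev (negbTE yv) => /esym/negbT h1.
  have := interval Ht Hp Hn nD (s y) (t := t.-1) ltac:(lia).
  rewrite ev' => h2.
  apply: (t_tot Ht); first by rewrite eq_sym.
  by rewrite h2; apply/negP=> /andP[_ h3]; move: h1; rewrite /= ; lia.
case: (Hp X hom) => [|hX].
  by rewrite cards2 (t_neq Ht ys).
have : #|X| = #|T| by rewrite hX cardsT.
by rewrite cards2 (t_neq Ht ys); lia.
Qed.

Lemma dg_le (T : finType) (adj : rel T) : is_tournament adj -> prime_tournament adj ->
  3 <= #|T| -> ~ has_subtournament D4_adj adj -> forall y z, dg adj y <= dg adj z.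
Proof.
move=> Ht Hp Hn nD y z.
rewrite -(iter_findex (cyc Ht Hp Hn nD y z)).
elim: (findex _ y z) => [//|i IH]; rewrite iterS; apply: leq_trans IH _.
exact: dg_mono.
Qed.

Lemma dg_bounds (T : finType) (adj : rel T) : is_tournament adj -> prime_tournament adj ->
  3 <= #|T| -> ~ has_subtournament D4_adj adj -> forall y,
  1 <= dg adj y /\ dg adj y + 2 <= #|T|.
Proof.
move=> Ht Hp Hn nD y; have [ys _] := sf_spec Ht Hp Hn nD y.
split.
  by have := interval Ht Hp Hn nD y (t := 1) ltac:(lia); rewrite /= ys => /esym; lia.
set w := iter #|T|.-1 (sf adj) y.
have ew : sf adj w = y by rewrite /w -iterS prednK ?(iter_n Ht Hp Hn nD) //; lia.
have [wy _] := sf_spec Ht Hp Hn nD w; rewrite ew in wy.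
have := interval Ht Hp Hn nD y (t := #|T|.-1) ltac:(lia).
rewrite -/w (negbTE (t_anti Ht wy)) => /esym/negbT; lia.
Qed.

Lemma n_odd (T : finType) (adj : rel T) : is_tournament adj -> prime_tournament adj ->
  3 <= #|T| -> ~ has_subtournament D4_adj adj -> forall y, #|T| = (dg adj y).*2.+1.
Proof.
move=> Ht Hp Hn nD y.
have [b1 b2] := dg_bounds Ht Hp Hn nD y.
set d := dg adj y in b1 b2 *.
have deq : forall z, dg adj z = d.
  by move=> z; apply/eqP; rewrite eqn_leq !(dg_le Ht Hp Hn nD).
set s := sf adj.
have itn := iter_n Ht Hp Hn nD.
set z := iter d s y.
have yz : adj y z by rewrite /z (interval Ht Hp Hn nD) ?b1 ?leqnn //; lia.
have zy : iter (#|T| - d) s z = y by rewrite /z -iterD subnK ?itn //; lia.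
have := interval Ht Hp Hn nD z (t := #|T| - d) ltac:(lia).
rewrite zy deq (negbTE (t_anti Ht yz)) => /esym/negbT h1.
set z' := iter d.+1 s y.
have nyz' : ~~ adj y z'.
  by rewrite /z' (interval Ht Hp Hn nD); [apply/negP=> /andP[_]; lia | lia].
have z'y : adj z' y.
  apply: (t_tot Ht) nyz'; rewrite eq_sym; apply: (iter_ne Ht Hp Hn nD); lia.
have z'y' : iter (#|T| - d.+1) s z' = y by rewrite /z' -iterD subnK ?itn //; lia.
have := interval Ht Hp Hn nD z' (t := #|T| - d.+1) ltac:(lia).
rewrite z'y' deq z'y => /esym/andP[_ h2].
move: h1; rewrite negb_and => h1; rewrite -addnn; lia.
Qed.

Lemma iter_mod (T : finType) (f : T -> T) n u : iter n f u = u ->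
  forall m, iter m f u = iter (m %% n) f u.
Proof.
move=> hn m; rewrite {1}(divn_eq m n) addnC iterD.
suff -> : forall q, iter (q * n) f u = u by [].
by elim=> [//|q IH]; rewrite mulSn iterD IH hn.
Qed.

Lemma main_dir (T : finType) (adj : rel T) : is_tournament adj -> prime_tournament adj ->
  3 <= #|T| -> ~ has_subtournament D4_adj adj ->
  exists n : nat, [/\ odd n, 3 <= n & isomorphic adj (Tn_adj n)].
Proof.
move=> Ht Hp Hn nD.
have [u0 _] : exists u0 : T, u0 \in T by apply/card_gt0P; case: Ht.
set s := sf adj.
have cy := cyc Ht Hp Hn nD.
have on := ord_n Ht Hp Hn nD.
have nd := n_odd Ht Hp Hn nD u0.
set d := dg adj u0 in nd.
have deq : forall z, dg adj z = d.
  by move=> z; apply/eqP; rewrite eqn_leq !(dg_le Ht Hp Hn nD).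
exists #|T|; split => //; first by rewrite nd /= odd_double.
have fl : forall y, findex s u0 y < #|T|.
  by move=> y; rewrite -(on u0); apply: findex_max.
pose f y := Ordinal (fl y).
exists f; split.
  exists (fun i : 'I_#|T| => iter i s u0).
    by move=> y; rewrite /f /= iter_findex.
  by move=> i; apply: val_inj; rewrite /f /= findex_iter // on.
move=> y z; rewrite /Tn_adj /f /=.
set a := findex s u0 y; set b := findex s u0 z.
have ha : a < #|T| := fl y. have hb : b < #|T| := fl z.
set t := (b + #|T| - a) %% #|T|.
have tn : t < #|T| by rewrite ltn_mod; lia.
have ey : iter a s u0 = y by apply: iter_findex.
have ez : iter b s u0 = z by apply: iter_findex.
have et : iter t s y = z.
  rewrite -ey -iterD (iter_mod (iter_n Ht Hp Hn nD u0)) /t modnDml subnK; last lia.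
  by rewrite modnDr modn_small.
rewrite -et (interval Ht Hp Hn nD) // deq nd.
by have -> : (d.*2.+1)./2 = d by exact: uphalf_double.
Qed.

Theorem theorem3p8 (T : finType) (adj : rel T) :
  is_tournament adj -> prime_tournament adj -> 3 <= #|T| ->
  (~ has_subtournament D4_adj adj <->
   exists n : nat, [/\ odd n, 3 <= n & isomorphic adj (Tn_adj n)]).
Proof.
move=> Ht Hp Hn; split; first exact: main_dir.
move=> [n [_ _ [f [_ Hf]]]] [g [_ Hg]].
apply: (@Tn_noD4 n (fun i => f (g i))) => u v.
by rewrite Hg Hf.
Qed.
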